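(* For any digraph ${\tt G}$, any two sign assignments $\epsilon,\epsilon'$ on the path poset $P({\tt G})$ are isomorphic, i.e. there is $\eta\colon P({\tt G})\to\mathbb Z_2$ with $\eta(x)+\epsilon'_{x,y}\equiv\epsilon_{x,y}+\eta(y)\pmod 2$ for every covering pair $x\,\tilde\triangleleft\,y$.
   Context: A digraph ${\tt G}=(V,E)$ has finite $V$ and $E\subseteq(V\times V)\setminus\{(v,v)\}$. A multipath is a spanning subgraph (all vertices, subset of edges) each of whose connected components (of the underlying undirected graph) is an isolated vertex or a simple directed path (edges $e_1,\dots,e_k$ with target of $e_i$ equal to source of $e_{i+1}$, no repeated vertex, not a cycle). The path poset $P({\tt G})$ is the set of multipaths ordered by inclusion of edge sets. In a poset, $x\,\tilde\triangleleft\,y$ means $y$ covers $x$; a square is $x,y,y',z$ with $y\neq y'$, $x\,\tilde\triangleleft\,y\,\tilde\triangleleft\,z$, $x\,\tilde\triangleleft\,y'\,\tilde\triangleleft\,z$. A sign assignment assigns $\epsilon_{x,y}\in\mathbb Z_2$ to each covering pair such that $\epsilon_{x,y}+\epsilon_{y,z}\equiv\epsilon_{x,y'}+\epsilon_{y',z}+1\pmod 2$ for every square. *)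

(* Defs.v *)
From mathcomp Require Import all_boot all_order all_algebra.
Set Implicit Arguments. Unset Strict Implicit. Unset Printing Implicit Defensive.
Import GRing.Theory.
Local Open Scope ring_scope.

(* A digraph is given by a finite vertex type V and an edge set
   E : {set V * V} without loops (hypothesis stated in the theorem). *)

Section PathPoset.
Variable V : finType.

Definition uadj (S : {set V * V}) : rel V :=
  fun x y => ((x, y) \in S) || ((y, x) \in S).

Definition comp (S : {set V * V}) (x : V) : pred V := connect (uadj S) x.

Definition consec (p : seq V) : seq (V * V) := zip p (behead p).

(* The component of x is an isolated vertex or a simple directed path:
   its vertices can be listed without repetition as v_0, ..., v_k so that
   the edges of S inside it are exactly (v_i, v_{i+1}). *)
Definition comp_is_path (S : {set V * V}) (x : V) : Prop :=
  exists p : seq V,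
    [/\ uniq p,
        (forall y, (y \in p) = comp S x y),
        (forall a b, (a, b) \in S -> a \in p -> (a, b) \in consec p) &
        (forall ab, ab \in consec p -> ab \in S)].

Definition multipath (E S : {set V * V}) : Prop :=
  S \subset E /\ forall x : V, comp_is_path S x.

Definition path_cover (E x y : {set V * V}) : Prop :=
  [/\ multipath E x, multipath E y, x \proper y &
      ~ exists z, [/\ multipath E z, x \proper z & z \proper y]].

Definition sign_assignment (E : {set V * V})
    (eps : {set V * V} -> {set V * V} -> 'Z_2) : Prop :=
  forall x y y' z, y != y' ->
    path_cover E x y -> path_cover E y z ->
    path_cover E x y' -> path_cover E y' z ->
    eps x y + eps y z = eps x y' + eps y' z + 1.

End PathPoset.

(* Main.v *)
Require Import Defs.
From mathcomp Require Import all_boot all_order all_algebra.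
From mathcomp Require Import ring.
Import GRing.Theory.
Local Open Scope ring_scope.

Set Implicit Arguments. Unset Strict Implicit.
Section Aux.
Variable V : finType.
Implicit Types (S T : {set V * V}) (p q s : seq V).

Lemma consec_cons2 x y s : consec [:: x, y & s] = (x, y) :: consec (y :: s).
Proof. by []. Qed.

Lemma mem_consec ab s : ab \in consec s -> (ab.1 \in s) && (ab.2 \in s).
Proof.
elim: s => [|x s IH] //; case: s IH => [|y s] IH //.
rewrite consec_cons2 inE => /orP[/eqP->|/IH/andP[h1 h2]].
  by rewrite /= !inE !eqxx ?orbT.
by apply/andP; split; rewrite in_cons ?h1 ?h2 orbT.
Qed.

Lemma consec_split p1 a b p2 :
  consec (rcons p1 a ++ b :: p2) = consec (rcons p1 a) ++ (a, b) :: consec (b :: p2).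
Proof.
elim: p1 => [|c p1 IH] //; case: p1 IH => [|d p1] IH //.
by rewrite rcons_cons cat_cons rcons_cons cat_cons consec_cons2 -cat_cons IH
  rcons_cons consec_cons2.
Qed.

Lemma split_consec ab p : ab \in consec p ->
  exists p1 p2, p = rcons p1 ab.1 ++ ab.2 :: p2.
Proof.
elim: p => [|x s IH] //; case: s IH => [|y s] IH //.
rewrite consec_cons2 inE => /orP[/eqP->|/IH[p1 [p2 ->]]].
  by exists [::], s.
by exists (x :: p1), p2.
Qed.

Lemma uadj_sym S : symmetric (uadj S).
Proof. by move=> x y; rewrite /uadj orbC. Qed.

Lemma connect_consec T q : (forall e, e \in consec q -> e \in T) ->
  forall y z, y \in q -> z \in q -> connect (uadj T) y z.
Proof.
move=> hq.
suff H : forall x0 y, y \in q -> connect (uadj T) (head x0 q) y.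
  move=> y z hy hz; apply: connect_trans (H y z hz).
  by rewrite (sym_connect_sym (@uadj_sym T)) (H y y hy).
elim: q hq => [|x s IH] hq x0 y //=.
rewrite inE => /orP[/eqP->|hy]; first exact: connect0.
case: s IH hq hy => [|w s] IH hq hy //.
apply: connect_trans (IH _ x0 _ hy).
  apply: connect1; rewrite /uadj hq ?orTb //; by rewrite consec_cons2 inE eqxx.
by move=> e he; apply: hq; rewrite consec_cons2 inE he orbT.
Qed.

Lemma comp_path_sub S T x p q :
  T \subset S -> uniq p -> (forall y, (y \in p) = Defs.comp S x y) ->
  (forall a b, (a, b) \in S -> a \in p -> (a, b) \in consec p) ->
  uniq q -> x \in q -> {subset q <= p} -> (forall e, e \in consec q -> e \in T) ->
  (forall ab, ab \in consec p -> ab \in T -> (ab.1 \in q) || (ab.2 \in q) ->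
     ab \in consec q) ->
  comp_is_path T x.
Proof.
move=> sTS up hp hpS uq xq sqp hqT hyp.
have hcl : forall c d, (c, d) \in T -> (c \in q) || (d \in q) -> (c, d) \in consec q.
  move=> c d hT hcd; have hS : (c, d) \in S by exact: (subsetP sTS).
  apply: (hyp (c, d)) => //; apply: hpS => //.
  case/orP: hcd => [/sqp //|/sqp hd].
  rewrite hp; apply: connect_trans (_ : Defs.comp S x d) _; first by rewrite -hp.
  by apply: connect1; rewrite /uadj hS orbT.
exists q; split => //.
- move=> y; apply/idP/idP => [hy|hc]; first exact: (connect_consec hqT xq hy).
  have cl : closed (uadj T) (mem q).
    have H2 : forall c d, (c, d) \in T -> (c \in q) || (d \in q) ->
      (c \in q) && (d \in q) by move=> c d h h'; exact: (mem_consec (hcl c d h h')).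
    move=> c d /orP[h|h]; apply/idP/idP => hm;
      by move: (H2 _ _ h); rewrite hm ?orbT => /(_ isT) /andP[].
  by rewrite -(closed_connect cl hc) xq.
- by move=> a b hab ha; apply: hcl => //; rewrite ha.
Qed.

Lemma comp_del S a b x : comp_is_path S x -> (a, b) \in S ->
  comp_is_path (S :\ (a, b)) x.
Proof.
case=> p [up hp hpS hSp] eS.
have sub : S :\ (a, b) \subset S by exact: subsetDl.
have inT : forall ab, ab \in S -> ab != (a, b) -> ab \in S :\ (a, b).
  by move=> ab h1 h2; rewrite in_setD1 h2 h1.
have inS : forall ab, ab \in S :\ (a, b) -> (ab != (a, b)) && (ab \in S).
  by move=> ab; rewrite in_setD1.
have xp : x \in p by rewrite hp; exact: connect0.
case: (boolP (a \in p)) => ha; last first.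
  apply: (comp_path_sub sub up hp hpS up xp) => //.
    move=> e' he'; apply: inT; first exact: hSp.
    apply/eqP => Ee; move: (mem_consec he'); rewrite Ee /= (negbTE ha) //.
have /split_consec [p1 [p2 Ep]] := hpS a b eS ha.
move: Ep => /= Ep; subst p.
have hc := consec_split p1 a b p2.
move: (up); rewrite cat_uniq => /and3P[u1 dis u2].
have disj : forall y, y \in rcons p1 a -> y \in b :: p2 -> False.
  by move=> y h1 h2; apply: (negP dis); apply/hasP; exists y.
case: (boolP (x \in rcons p1 a)) => hx.
  apply: (comp_path_sub sub up hp hpS u1 hx) => //.
  - by move=> y hy; rewrite mem_cat hy.
  - move=> e' he'; apply: inT; first by apply: hSp; rewrite hc mem_cat he'.
    apply/eqP => Ee; move: (mem_consec he'); rewrite Ee /= => /andP[_ hb].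
    by apply: (disj b hb); rewrite inE eqxx.
  - move=> ab; rewrite hc mem_cat inE => /orP[//|/orP[/eqP ->|h]].
      by move/inS; rewrite eqxx.
    move=> _ h'; have /andP[h1 h2] := mem_consec h.
    by case/orP: h' => h3; [case: (disj _ h3 h1) | case: (disj _ h3 h2)].
have hx' : x \in b :: p2 by move: xp; rewrite mem_cat (negbTE hx).
apply: (comp_path_sub sub up hp hpS u2 hx') => //.
- by move=> y hy; rewrite mem_cat hy orbT.
- move=> e' he'; apply: inT; first by apply: hSp; rewrite hc mem_cat inE he' !orbT.
  apply/eqP => Ee; move: (mem_consec he'); rewrite Ee /= => /andP[ha' _].
  by apply: (disj a _ ha'); rewrite mem_rcons inE eqxx.
- move=> ab; rewrite hc mem_cat inE => /orP[h|/orP[/eqP ->|//]]; last first.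
    by move/inS; rewrite eqxx.
  move=> _ h'; have /andP[h1 h2] := mem_consec h.
  by case/orP: h' => h3; [case: (disj _ h1 h3) | case: (disj _ h2 h3)].
Qed.

Lemma multipath_del E S e : multipath E S -> multipath E (S :\ e).
Proof.
case=> sSE hS; split; first exact: subset_trans (subsetDl _ _) sSE.
case: (boolP (e \in S)) => eS; last first.
  have -> : S :\ e = S.
    by apply/setP=> y; rewrite in_setD1; case: eqP => // ->; rewrite (negbTE eS).
  exact: hS.
case: e eS => a b eS x; exact: comp_del (hS x) eS.
Qed.

Lemma multipath_sub E S T : multipath E S -> T \subset S -> multipath E T.
Proof.
move: {2}#|S| (leqnn #|S|) => n; elim: n S => [|n IH] S hn hS sTS.
  move: hn; rewrite leqn0 cards_eq0 => /eqP S0.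
  by move: sTS; rewrite S0 subset0 => /eqP ->; rewrite -S0.
case: (eqVneq T S) => [->//|nTS].
have /properP [_ [e eS eT]] : T \proper S by rewrite properEneq nTS.
apply: (IH (S :\ e)); first by rewrite -ltnS (leq_trans _ hn) // (cardsD1 e S) eS.
  exact: multipath_del.
by apply/subsetP => y hy; rewrite in_setD1 (subsetP sTS) // andbT; apply: contraNneq eT => <-.
Qed.

Lemma cover_char (E x y : {set V * V}) : path_cover E x y -> exists2 a, a \notin x & y = a |: x.
Proof.
case=> mx my pxy nz.
have /properP [sxy [a ay ax]] := pxy.
exists a => //; case: (eqVneq y (a |: x)) => // ne; exfalso; apply: nz.
exists (y :\ a); split.
- exact: multipath_sub my (subsetDl _ _).
- rewrite properEneq; apply/andP; split.
    by apply: (contra_neq _ ne) => Ex; rewrite Ex setD1K.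
  apply/subsetP => z hz; rewrite in_setD1 (subsetP sxy) // andbT.
  by apply: contraNneq ax => <-.
- exact: properD1.
Qed.

Lemma cover_add (E x : {set V * V}) a : multipath E x -> a \notin x -> multipath E (a |: x) ->
  path_cover E x (a |: x).
Proof.
move=> mx ax my; split => //.
  by rewrite properEcard subsetUr cardsU1 ax add1n ltnSn.
case=> z [_ h1 h2]; have c1 := proper_card h1; have c2 := proper_card h2.
by move: (leq_ltn_trans c1 c2); rewrite cardsU1 ax add1n ltnn.
Qed.

Lemma perm_set (s t : seq (V * V)) : perm_eq s t -> [set:: s] = [set:: t] :> {set V * V}.
Proof. by move=> h; apply/setP => y; rewrite !inE (perm_mem h). Qed.

Variables (E : {set V * V}) (eps eps' : {set V * V} -> {set V * V} -> 'Z_2).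
Hypotheses (he : sign_assignment E eps) (he' : sign_assignment E eps').

Definition dd x y := eps' x y - eps x y.

Lemma d_square x a b : multipath E (b |: (a |: x)) -> a != b -> a \notin x ->
  b \notin x ->
  dd x (a |: x) + dd (a |: x) (b |: (a |: x)) =
  dd x (b |: x) + dd (b |: x) (a |: (b |: x)).
Proof.
move=> mz nab ax bx.
have Ez : a |: (b |: x) = b |: (a |: x) by rewrite setUCA.
have mx : multipath E x.
  by apply: multipath_sub mz _; apply/subsetP => y hy; rewrite !in_setU1 hy !orbT.
have ma : multipath E (a |: x).
  by apply: multipath_sub mz _; apply/subsetP => y; rewrite !in_setU1 => ->; rewrite orbT.
have mb : multipath E (b |: x).
  apply: multipath_sub mz _; apply/subsetP => y; rewrite !in_setU1.
  by case/orP => ->; rewrite ?orbT.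
have bax : b \notin a |: x by rewrite in_setU1 negb_or eq_sym nab bx.
have abx : a \notin b |: x by rewrite in_setU1 negb_or nab ax.
have c1 := cover_add mx ax ma.
have c2 := cover_add mx bx mb.
have c3 := cover_add ma bax mz.
have mz' : multipath E (a |: (b |: x)) by rewrite Ez.
have c4 := cover_add mb abx mz'.
have ny : a |: x != b |: x.
  by apply: contraNneq abx => <-; rewrite in_setU1 eqxx.
rewrite -Ez in c3 *.
have h1 := he ny c1 c3 c2 c4.
have h2 := he' ny c1 c3 c2 c4.
rewrite /dd; move: h1 h2.
have key : forall p q r s2 p' q' r' s' : 'Z_2, p + q = r + s2 + 1 ->
  p' + q' = r' + s' + 1 -> (p' - p) + (q' - q) = (r' - r) + (s' - s2).
  move=> p q r s2 p' q' r' s' H1 H2.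
  have E1 : p' - p + (q' - q) = (p' + q') - (p + q) by ring.
  by rewrite E1 H1 H2; ring.
exact: key.
Qed.

Fixpoint FF (s : seq (V * V)) : 'Z_2 :=
  if s is a :: s' then FF s' + dd [set:: s'] (a |: [set:: s']) else 0.

Lemma FF_front (s : seq (V * V)) a : uniq s -> multipath E [set:: s] -> a \in s ->
  FF s = FF (a :: rem a s).
Proof.
elim: s => [|b s IH] //= /andP[bs us] ms.
rewrite inE; case: (eqVneq a b) => [->|nab] /= ; first by [].
move=> as_.
have ms' : multipath E [set:: s].
  by apply: multipath_sub ms _; rewrite set_cons subsetUr.
rewrite (IH us ms' as_) /=.
set r := rem a s.
have Es : [set:: s] = a |: [set:: r] by rewrite (perm_set (perm_to_rem as_)) set_cons.
have ar : a \notin [set:: r] by rewrite inE mem_rem_uniqF.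
have br : b \notin [set:: r] by rewrite inE; apply: contra bs; exact: mem_rem.
have gen : forall f A B C D : 'Z_2, A + B = C + D -> f + A + B = f + C + D.
  by move=> f A B C D H; rewrite -!addrA H.
rewrite Es set_cons; apply: gen; apply: d_square => //; first by rewrite -Es -set_cons.
Qed.

Lemma FF_perm (s t : seq (V * V)) : uniq s -> uniq t -> perm_eq s t -> multipath E [set:: s] ->
  FF s = FF t.
Proof.
elim: s t => [|a s IH] t us ut pst ms.
  by case: t pst ut => // b t /perm_size.
have at_ : a \in t by rewrite -(perm_mem pst) inE eqxx.
have mt : multipath E [set:: t] by rewrite -(perm_set pst).
rewrite (FF_front ut mt at_) /=.
have pst' : perm_eq s (rem a t).
  by rewrite -(perm_cons a); apply: perm_trans pst (perm_to_rem at_).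
move: us => /= /andP[_ us].
have ms' : multipath E [set:: s].
  by apply: multipath_sub ms _; rewrite set_cons subsetUr.
by rewrite (IH _ us (rem_uniq _ ut) pst' ms') (perm_set pst').
Qed.

Lemma main_eta : exists eta : {set V * V} -> 'Z_2,
    forall x y, path_cover E x y -> eta x + eps' x y = eps x y + eta y.
Proof.
exists (fun x : {set V * V} => FF (enum x)) => x y cxy.
have [a ax Ey] := cover_char cxy.
have my : multipath E y by case: cxy.
have -> : FF (enum y) = FF (a :: enum x).
  apply: FF_perm.
  - exact: enum_uniq.
  - by rewrite /= mem_enum ax enum_uniq.
  - apply: uniq_perm; rewrite ?enum_uniq /= ?mem_enum ?ax ?enum_uniq //.
    by move=> z; rewrite mem_enum Ey in_setU1 inE mem_enum.
  - by rewrite set_enum.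
rewrite /= set_enum -Ey /dd; ring.
Qed.
End Aux.

Unset Implicit Arguments.
Theorem corollary3p17 (V : finType) (E : {set V * V})
    (E_loopless : forall v : V, (v, v) \notin E)
    (eps eps' : {set V * V} -> {set V * V} -> 'Z_2) :
  sign_assignment E eps -> sign_assignment E eps' ->
  exists eta : {set V * V} -> 'Z_2,
    forall x y, path_cover E x y -> eta x + eps' x y = eps x y + eta y.
Proof. by move=> h h'; exact: main_eta h h'. Qed.
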